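(* There is an absolute constant $C$ such that for every coverage function $f\colon\mathbb F_2^n\to[0,1]$ and every $\epsilon\in(0,1]$, $R^{lin}_{\epsilon\text{-approx}}(f)\le C/\epsilon$.
   Context: $f\colon 2^{[n]}\to\mathbb R$ (identified with a function on $\mathbb F_2^n$ via $x\leftrightarrow\{i:x_i=1\}$) is a coverage function if there is a finite universe $U=\{1,\dots,m\}$, subsets $A_1,\dots,A_n\subseteq U$ and non-negative weights $w_1,\dots,w_m$ with $f(S)=\sum_{u\in\bigcup_{j\in S}A_j}w_u$. For $S\subseteq[n]$, $\chi_S(x)=\sum_{i\in S}x_i\pmod2$. Approximate randomized $\mathbb F_2$-sketch complexity: $R^{lin}_{\epsilon\text{-approx}}(f)$ is the smallest integer $k$ such that there exist a probability distribution over $k$-tuples of subsets $\mathbf S_1,\dots,\mathbf S_k\subseteq[n]$ and $g\colon\mathbb F_2^k\to\mathbb R$ with $\mathbb E_{\mathbf S_1,\dots,\mathbf S_k}[(g(\chi_{\mathbf S_1}(x),\dots,\chi_{\mathbf S_k}(x))-f(x))^2]\le\epsilon$ for every $x\in\mathbb F_2^n$. *)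

(* Defs.v *)
From HB Require Import structures.
From mathcomp Require Import all_boot all_order all_algebra.
Set Implicit Arguments. Unset Strict Implicit. Unset Printing Implicit Defensive.
Import Order.TTheory GRing.Theory Num.Theory.
Local Open Scope ring_scope.

(* Points of F_2^n are identified with subsets of [n] = 'I_n: x <-> {i | x_i = 1}. *)

Definition coverage (R : numDomainType) (n : nat) (f : {set 'I_n} -> R) : Prop :=
  exists (m : nat) (A : 'I_n -> {set 'I_m}) (w : 'I_m -> R),
    (forall u, 0 <= w u) /\
    forall S : {set 'I_n}, f S = \sum_(u in \bigcup_(j in S) A j) w u.

(* chi_S(x) = sum_{i in S} x_i mod 2 *)
Definition chi (n : nat) (S x : {set 'I_n}) : bool := odd #|S :&: x|.

Definition sketch_approx (R : numDomainType) (n : nat) (f : {set 'I_n} -> R)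
    (eps : R) (k : nat) : Prop :=
  exists (mu : {ffun 'I_k -> {set 'I_n}} -> R) (g : {ffun 'I_k -> bool} -> R),
    (forall t, 0 <= mu t) /\ (\sum_t mu t = 1) /\
    forall x : {set 'I_n},
      \sum_t mu t * (g [ffun i => chi (t i) x] - f x) ^+ 2 <= eps.

(* R^lin_{eps-approx}(f) <= b  (the least such k is <= b iff some such k is <= b) *)
Definition Rlin_le (R : numDomainType) (n : nat) (f : {set 'I_n} -> R)
    (eps b : R) : Prop :=
  exists k : nat, k%:R <= b /\ sketch_approx f eps k.

(* Main.v *)
Require Import Defs.
From HB Require Import structures.
From mathcomp Require Import all_boot all_order all_algebra.
From mathcomp Require Import ring lra.
Set Implicit Arguments. Unset Strict Implicit. Unset Printing Implicit Defensive.
Import Order.TTheory GRing.Theory Num.Theory.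

Lemma parity_count (n : nat) (B x : {set 'I_n}) : B :&: x != set0 ->
  (#|powerset B :&: [set S | odd #|S :&: x|]|).*2 = 2 ^ #|B|.
Proof.
case/set0Pn=> j; rewrite inE => /andP [jB jx].
pose tog (S : {set 'I_n}) := if j \in S then S :\ j else j |: S.
have togK : involutive tog.
  move=> S; rewrite /tog; case jS: (j \in S).
    by rewrite setD11 setD1K.
  by rewrite setU11 setU1K ?jS.
have togodd S : odd #|tog S :&: x| = ~~ odd #|S :&: x|.
  rewrite /tog; case: ifP => jS.
    have -> : (S :\ j) :&: x = (S :&: x) :\ j.
      by apply/setP => y; rewrite !inE; case: (y == j); case: (y \in S); case: (y \in x).
    by rewrite [#|S :&: x|](cardsD1 j) inE jS jx /= negbK.
  have -> : (j |: S) :&: x = j |: (S :&: x).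
    apply/setP => y; rewrite !inE; case: eqP => [->|]; rewrite ?jx ?orbT //.
  by rewrite cardsU1 inE jS /=.
have togB S : (tog S \in powerset B) = (S \in powerset B).
  rewrite !inE /tog; case: ifP => jS.
    apply/idP/idP => H; last by apply: subset_trans H; apply: subD1set.
    by rewrite -(setD1K jS) subUset sub1set jB.
  by rewrite subUset sub1set jB.
have E : tog @: (powerset B :&: [set S | odd #|S :&: x|]) =
         powerset B :\: [set S | odd #|S :&: x|].
  apply/setP => S; apply/imsetP/idP.
    case=> T; rewrite !inE => /andP [TB To] ->.
    by have := togB T; rewrite !inE => ->; rewrite TB togodd To.
  rewrite !inE => /andP [So SB]; exists (tog S); last by rewrite togK.
  by have := togB S; rewrite !inE => ->; rewrite togodd So SB.
rewrite -card_powerset -[in RHS](cardsID [set S | odd #|S :&: x|]) -E card_imset ?addnn //.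
exact: inv_inj.
Qed.

Local Open Scope ring_scope.

Lemma prod_exp (R : comRingType) (T : finType) (k : nat) (P : T -> R)
  (H : 'I_k -> T -> R) :
  \sum_(t : {ffun 'I_k -> T}) (\prod_i P (t i)) * \prod_i H i (t i) =
  \prod_i \sum_S P S * H i S.
Proof.
rewrite bigA_distr_bigA; apply: eq_bigr => t _; by rewrite -big_split.
Qed.

Lemma prod2 (R : comRingType) (k : nat) (i j : 'I_k) (U V UV : 'I_k -> R) :
  \prod_l (if l == i then (if l == j then UV l else U l)
           else if l == j then V l else 1) =
  if i == j then UV i else U i * V j.
Proof.
rewrite (bigD1 i) //= eqxx.
case: (eqVneq i j) => [<-|nij].
  rewrite big1 ?mulr1 // => l /negbTE ->; by [].
have nji : (j == i) = false by rewrite eq_sym (negbTE nij).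
rewrite (bigD1 j) /=; last by rewrite nji.
rewrite nji eqxx.
rewrite big1 ?mulr1 // => l /andP [/negbTE -> /negbTE ->]; by [].
Qed.

Lemma avg (R : realFieldType) (T : finType) (k : nat) (P : T -> R) (a : T -> R) (m V : R) :
  (0 < k)%N -> \sum_S P S = 1 -> \sum_S P S * a S = m ->
  \sum_S P S * (a S - m) ^+ 2 <= V ->
  \sum_(t : {ffun 'I_k -> T}) (\prod_i P (t i)) * ((\sum_i a (t i)) / k%:R - m) ^+ 2
    <= V / k%:R.
Proof.
move=> k0 P1 Pa PV.
have kn0 : (k%:R : R) != 0 by rewrite pnatr_eq0 -lt0n.
pose d S := a S - m.
have Pd : \sum_S P S * d S = 0.
  rewrite /d; under eq_bigr => S _ do rewrite mulrBr.
  by rewrite sumrB Pa -mulr_suml P1 mul1r subrr.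
have key (t : {ffun 'I_k -> T}) : (\sum_i a (t i)) / k%:R - m = (\sum_i d (t i)) / k%:R.
  by rewrite /d sumrB sumr_const card_ord mulrBl -[m *+ k]mulr_natr mulfK.
have E (i j : 'I_k) : \sum_(t : {ffun 'I_k -> T}) (\prod_l P (t l)) * (d (t i) * d (t j)) =
    if i == j then \sum_S P S * d S ^+ 2 else 0.
  pose H (l : 'I_k) := fun S => if l == i then (if l == j then d S ^+ 2 else d S)
           else if l == j then d S else 1.
  transitivity (\sum_(t : {ffun 'I_k -> T}) (\prod_l P (t l)) * \prod_l H l (t l)).
    apply: eq_bigr => t _; congr (_ * _); rewrite /H.
    rewrite (prod2 i j (fun l => d (t l)) (fun l => d (t l)) (fun l => d (t l) ^+ 2)).
    by case: eqP => [->|]; rewrite ?expr2.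
  rewrite prod_exp /H.
  rewrite (eq_bigr (fun l => if l == i then (if l == j then \sum_S P S * d S ^+ 2
          else \sum_S P S * d S) else if l == j then \sum_S P S * d S else 1)).
    by rewrite prod2 Pd mul0r; case: eqP.
  move=> l _; case: (l == i); case: (l == j) => //.
  by under eq_bigr => S _ do rewrite mulr1.
have pt (t : {ffun 'I_k -> T}) : (\prod_i P (t i)) * ((\sum_i a (t i)) / k%:R - m) ^+ 2
   = (\sum_i \sum_j (\prod_l P (t l)) * (d (t i) * d (t j))) / k%:R ^+ 2.
  rewrite key expr_div_n expr2 big_distrlr /= mulrA mulr_sumr; congr (_ / _).
  by apply: eq_bigr => i _; rewrite mulr_sumr.
under eq_bigr => t _ do rewrite pt.
rewrite -mulr_suml exchange_big /=.
under eq_bigr => i _ do rewrite exchange_big /=.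
under eq_bigr => i _ do under eq_bigr => j _ do rewrite E.
have inner (i : 'I_k) : \sum_(j < k) (if i == j then \sum_S P S * d S ^+ 2 else 0)
    = \sum_S P S * d S ^+ 2.
  rewrite (bigD1 i) //= eqxx [X in _ + X]big1 ?addr0 // => j /negbTE; rewrite eq_sym => -> //.
under eq_bigr => i _ do rewrite inner.
rewrite sumr_const card_ord -[(\sum_S P S * d S ^+ 2) *+ k]mulr_natr expr2 invfM mulrA mulfK //.
by rewrite ler_pM2r ?invr_gt0 ?ltr0n.
Qed.

Lemma sum_ind (R : pzSemiRingType) (T : finType) (A : {set T}) :
  \sum_(S : T) ((S \in A)%:R : R) = #|A|%:R.
Proof.
rewrite -sum1_card natr_sum [RHS]big_mkcond /=; apply: eq_bigr => S _; by case: (S \in A).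
Qed.

Lemma sketch_exact (R : numDomainType) (n : nat) (f : {set 'I_n} -> R) (eps : R) (k : nat)
  (t0 : {ffun 'I_k -> {set 'I_n}}) (g : {ffun 'I_k -> bool} -> R) :
  0 <= eps -> (forall x, g [ffun i => chi (t0 i) x] = f x) -> sketch_approx f eps k.
Proof.
move=> e0 hg; exists (fun t => (t == t0)%:R), g; split; first by move=> t; exact: ler0n.
split.
  by rewrite (bigD1 t0) //= eqxx [X in _ + X]big1 ?addr0 // => t /negbTE ->.
move=> x; rewrite (bigD1 t0) //= eqxx hg subrr expr2 mulr0 mulr0 add0r.
by rewrite big1 // => t /negbTE ->; rewrite mul0r.
Qed.

Lemma cnt_value (R : numFieldType) (n : nat) (B x : {set 'I_n}) :
  (#|powerset B :&: [set S | odd #|S :&: x|]|%:R : R) =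
  (B :&: x != set0)%:R * (2 ^ #|B|)%:R / 2.
Proof.
case: (eqVneq (B :&: x) set0) => Bx /=.
  rewrite mul0r mul0r.
  suff -> : powerset B :&: [set S | odd #|S :&: x|] = set0 by rewrite cards0.
  apply/setP => S; rewrite !inE; apply/negP => /andP [SB].
  have : S :&: x \subset B :&: x by rewrite setSI.
  by rewrite Bx subset0 => /eqP ->; rewrite cards0.
have := parity_count Bx => <-.
by rewrite -muln2 natrM mul1r mulfK // pnatr_eq0.
Qed.

Lemma random_sketch (R : rcfType) (n : nat) (f : {set 'I_n} -> R) (k : nat) :
  coverage f -> (forall x, 0 <= f x <= 1) -> (0 < k)%N -> sketch_approx f (2 / k%:R) k.
Proof.
case=> m [A [w [hw hf]]] hf01 k0.
pose Bu (u : 'I_m) := [set j | u \in A j].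
have memc (S : {set 'I_n}) (u : 'I_m) : (u \in \bigcup_(j in S) A j) = (Bu u :&: S != set0).
  apply/bigcupP/set0Pn => [[j jS uA]|[j]]; first by exists j; rewrite !inE uA jS.
  by rewrite !inE => /andP [uA jS]; exists j.
have hcov (S : {set 'I_n}) : f S = \sum_u w u * (Bu u :&: S != set0)%:R.
  rewrite hf big_mkcond /=; apply: eq_bigr => u _; rewrite memc.
  by case: (_ != _); rewrite ?mulr1 ?mulr0.
pose W := f setT.
have hW : W = \sum_u w u * (Bu u != set0)%:R.
  by rewrite /W hcov; apply: eq_bigr => u _; rewrite setIT.
have k0R : 0 < k%:R :> R by rewrite ltr0n.
have e0 : 0 <= 2 / k%:R :> R by rewrite divr_ge0 // ?ler0n // ltW.
case: (eqVneq W 0) => W0.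
  have fx0 x : f x = 0.
    apply/eqP; rewrite eq_le; have := hf01 x => /andP [-> _]; rewrite andbT -W0 hW hcov.
    apply: ler_sum => u _; apply: ler_wpM2l => //; rewrite ler_nat.
    by case: (eqVneq (Bu u) set0) => [->|]; rewrite ?set0I ?eqxx ?leq_b1.
  by apply: (@sketch_exact _ _ _ _ _ [ffun => set0] (fun _ => 0)) => // x; rewrite fx0.
have W1 : 0 <= W <= 1 by exact: hf01.
have Wpos : 0 < W by rewrite lt_def W0; case/andP: W1.
pose c := 2 * W.
have c0 : c != 0 by rewrite /c mulf_neq0 // pnatr_eq0.
have p2 (B : {set 'I_n}) : ((2 ^ #|B|)%:R : R) != 0 by rewrite pnatr_eq0 expn_eq0.
pose r u := w u * (Bu u != set0)%:R / W / (2 ^ #|Bu u|)%:R.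
pose P S := \sum_u r u * (S \in powerset (Bu u))%:R.
have sumP (h : {set 'I_n} -> R) : \sum_S P S * h S =
    \sum_u r u * \sum_S (S \in powerset (Bu u))%:R * h S.
  under eq_bigr => S _ do rewrite /P mulr_suml.
  rewrite exchange_big; apply: eq_bigr => u _; rewrite mulr_sumr.
  by apply: eq_bigr => S _; rewrite mulrA.
have P1 : \sum_S P S = 1.
  have := sumP (fun _ => 1); under eq_bigr do rewrite mulr1; move=> ->.
  under eq_bigr => u _ do (under eq_bigr do rewrite mulr1; rewrite sum_ind card_powerset).
  transitivity (\sum_u w u * (Bu u != set0)%:R / W).
    by apply: eq_bigr => u _; rewrite /r mulfVK.
  by rewrite -mulr_suml -hW divff.
have P0 S : 0 <= P S.
  apply: sumr_ge0 => u _; apply: mulr_ge0; last exact: ler0n.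
  by rewrite /r !divr_ge0 ?mulr_ge0 ?ler0n ?(ltW Wpos).
have Pchi x : \sum_S P S * (chi S x)%:R = f x / c.
  rewrite sumP hcov mulr_suml; apply: eq_bigr => u _.
  have -> : \sum_S (S \in powerset (Bu u))%:R * (chi S x)%:R =
      (#|powerset (Bu u) :&: [set S | odd #|S :&: x|]|%:R : R).
    rewrite -sum_ind; apply: eq_bigr => S _; rewrite !inE /chi.
    by case: (S \subset Bu u); case: (odd _); rewrite ?mulr1 ?mulr0 ?mul1r ?mul0r.
  rewrite cnt_value /r.
  case: (eqVneq (Bu u :&: x) set0) => h.
    by rewrite !(mul0r, mulr0).
  have Bn : Bu u != set0 by apply: contraNneq h => ->; rewrite set0I.
  rewrite Bn /=. rewrite /c; field; rewrite ?W0 ?p2 ?pnatr_eq0 //.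
exists (fun t => \prod_i P (t i)), (fun b : {ffun 'I_k -> bool} => (\sum_i c * (b i)%:R) / k%:R).
split; first by move=> t; apply: prodr_ge0 => i _; exact: P0.
split.
  transitivity (\prod_(i < k) \sum_S P S); first by rewrite bigA_distr_bigA.
  by rewrite big1 // => i _; exact: P1.
move=> x.
have Ha : \sum_S P S * (c * (chi S x)%:R) = f x.
  under eq_bigr do rewrite mulrCA.
  by rewrite -mulr_sumr Pchi mulrC divfK.
have HV : \sum_S P S * (c * (chi S x)%:R - f x) ^+ 2 <= 2.
  have pw S : P S * (c * (chi S x)%:R - f x) ^+ 2 =
      c * (P S * (c * (chi S x)%:R)) - (2 * f x) * (P S * (c * (chi S x)%:R))
      + f x ^+ 2 * P S.
    by case: (chi S x) => /=; rewrite ?mulr1n ?mulr0n; ring.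
  rewrite (eq_bigr _ (fun S _ => pw S)) big_split sumrB /= -!mulr_sumr Ha P1.
  have := hf01 x; case/andP: W1; rewrite /c => Wa Wb /andP [fa fb].
  nra.
rewrite (eq_bigr (fun t : {ffun 'I_k -> {set 'I_n}} => (\prod_i P (t i)) *
   ((\sum_i (fun S => c * (chi S x)%:R) (t i)) / k%:R - f x) ^+ 2)).
  exact: (avg k0 P1 Ha HV).
move=> t _; congr (_ * (_ / _ - _) ^+ 2); apply: eq_bigr => i _; by rewrite ffunE.
Qed.

Lemma sketch_mono (R : numDomainType) (n : nat) (f : {set 'I_n} -> R) (e e' : R) (k : nat) :
  sketch_approx f e k -> e <= e' -> sketch_approx f e' k.
Proof.
case=> mu [g [h1 [h2 h3]]] ee; exists mu, g; split=> //; split=> // x.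
exact: le_trans (h3 x) ee.
Qed.

Theorem mainTheorem15 :
  exists C : nat,
    forall (R : rcfType) (n : nat) (f : {set 'I_n} -> R),
      coverage f ->
      (forall x, 0 <= f x <= 1) ->
      forall eps : R, 0 < eps <= 1 ->
        Rlin_le f eps (C%:R / eps).
Proof.
exists 3%N => R n f cov h01 eps /andP [e0 e1].
case: (boolP (n%:R <= 3%:R / eps)) => hn.
  exists n; split => //.
  apply: (@sketch_exact _ _ _ _ _ [ffun i => [set i]] (fun b => f [set i | b i])).
    exact: ltW.
  move=> x; congr f; apply/setP => i; rewrite inE !ffunE /chi.
  have -> : [set i] :&: x = if i \in x then [set i] else set0.
    case ix: (i \in x); apply/setP => j; rewrite !inE; case: eqP => [->|] //=; by rewrite ix.
  by case: (i \in x); rewrite ?cards1 ?cards0.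
have ex : exists k : nat, (fun k : nat => 2%:R <= k%:R * eps :> R) k.
  exists n => /=; move: hn; rewrite -ltNge ltr_pdivrMr // => hn.
  by apply: (le_trans _ (ltW hn)); rewrite ler_nat.
case: (ex_minnP ex) => k Pk kmin.
have k0 : (0 < k)%N.
  rewrite lt0n; apply/eqP => k0; move: Pk; rewrite k0 mul0r.
  by move=> H; have := lt_le_trans (ltr0Sn R 1) H; rewrite ltxx.
have Pk1 : ~~ (2%:R <= (k.-1)%:R * eps :> R).
  apply/negP => /kmin; by rewrite -{1}(prednK k0) ltnn.
have kk : (k%:R : R) = (k.-1)%:R + 1 by rewrite natr1 prednK.
exists k; split.
  rewrite ler_pdivlMr //; move: Pk1; rewrite -ltNge kk => Pk1.
  have : (k.-1)%:R * eps + eps <= 2%:R + 1 :> R by rewrite lerD // ltW.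
  by rewrite mulrDl mul1r natr1.
apply: sketch_mono (random_sketch cov h01 k0) _.
by rewrite ler_pdivrMr // ?ltr0n // mulrC.
Qed.
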